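(* Let $\mathcal{V}$ be a finite set of $n$ nodes, each carrying a label in $\{1,\dots,h\}$, and for $s\in[h]$ let $\mathcal{C}_s\subseteq\mathcal{V}$ be the set of nodes with label $s$, so that $\mathcal{V}=\dot{\bigcup}_{s\in[h]}\mathcal{C}_s$. Let $\mathbf{F}\in\{0,1\}^{n\times h}$ be the label-membership indicator matrix, $F_{i,s}=1$ if node $i$ has label $s$ and $F_{i,s}=0$ otherwise. Let $v\ge1$ and define $\widetilde{\mathbf{M}}\in\mathbb{R}^{h\times v}$ by $\widetilde{M}_{s,j}=\frac{|\mathcal{C}_s|}{\sqrt{nv}}$. For a partition $\mathcal{V}=\dot{\bigcup}_{j\in[v]}\mathcal{V}_j$ into nonempty parts, let $\mathbf{H}\in\mathbb{R}^{n\times v}$ be its normalized group-membership indicator matrix, $H_{ij}=1/\sqrt{|\mathcal{V}_j|}$ if $i\in\mathcal{V}_j$ and $H_{ij}=0$ otherwise. Then the partition is fair and balanced if and only if $\mathbf{F}^{\intercal}\mathbf{H}=\widetilde{\mathbf{M}}$.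
   Context: A partition $\mathcal{V}=\dot{\bigcup}_{j\in[v]}\mathcal{V}_j$ is called balanced if $|\mathcal{V}_j|=n/v$ for every $j\in[v]$, and fair if for every $j\in[v]$ and $s\in[h]$ the proportion of label $s$ in the part equals its proportion in the whole set: $\frac{|\mathcal{C}_s\cap\mathcal{V}_j|}{|\mathcal{V}_j|}=\frac{|\mathcal{C}_s|}{n}$. *)

(* Defs.v *)
From mathcomp Require Import all_boot all_order all_algebra.
Set Implicit Arguments. Unset Strict Implicit. Unset Printing Implicit Defensive.
Import Order.TTheory GRing.Theory Num.Theory.
Local Open Scope ring_scope.

(* Nodes are 'I_n, labels are 'I_h (label s <-> s+1 in the paper),
   a partition into v parts is given by part : 'I_n -> 'I_v. *)

Definition labclass n h (lab : 'I_n -> 'I_h) (s : 'I_h) : {set 'I_n} :=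
  [set i | lab i == s].

Definition block n v (part : 'I_n -> 'I_v) (j : 'I_v) : {set 'I_n} :=
  [set i | part i == j].

Definition balanced n v (part : 'I_n -> 'I_v) : Prop :=
  forall j, (#|block part j|%:Q = n%:Q / v%:Q)%R.

Definition fair n h v (lab : 'I_n -> 'I_h) (part : 'I_n -> 'I_v) : Prop :=
  forall j s, (#|labclass lab s :&: block part j|%:Q / #|block part j|%:Q
               = #|labclass lab s|%:Q / n%:Q)%R.

Definition Fmx (R : rcfType) n h (lab : 'I_n -> 'I_h) : 'M[R]_(n, h) :=
  \matrix_(i, s) (lab i == s)%:R.

Definition Hmx (R : rcfType) n v (part : 'I_n -> 'I_v) : 'M[R]_(n, v) :=
  \matrix_(i, j) (if part i == j then (Num.sqrt (#|block part j|%:R))^-1 else 0).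

Definition Mtilde (R : rcfType) n h v (lab : 'I_n -> 'I_h) : 'M[R]_(h, v) :=
  \matrix_(s, j) (#|labclass lab s|%:R / Num.sqrt ((n * v)%N%:R)).

(* Main.v *)
Require Import Defs.
From mathcomp Require Import all_boot all_order all_algebra.
From mathcomp Require Import zify ring lra.
Import Order.TTheory GRing.Theory Num.Theory.
Local Open Scope ring_scope.

Lemma sum_lab n h (lab : 'I_n -> 'I_h) (A : {set 'I_n}) :
  (\sum_s #|labclass lab s :&: A| = #|A|)%N.
Proof.
rewrite -sum1_card (partition_big lab predT) //=.
apply: eq_bigr => s _; rewrite -sum1_card; apply: eq_bigl => i.
by rewrite !inE andbC.
Qed.

Lemma entry (R : rcfType) n h v (lab : 'I_n -> 'I_h) (part : 'I_n -> 'I_v) s j :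
  ((Fmx R lab)^T *m Hmx R part) s j =
  #|labclass lab s :&: block part j|%:R / Num.sqrt (#|block part j|%:R).
Proof.
rewrite !mxE (bigID (fun i => i \in labclass lab s :&: block part j)) /=.
rewrite [X in _ + X]big1 ?addr0; last first.
  move=> i; rewrite !inE !mxE => /nandP [] /negbTE ->; first by rewrite mul0r.
  by rewrite mulr0.
rewrite (eq_bigr (fun _ => (Num.sqrt (#|block part j|%:R))^-1)); last first.
  by move=> i; rewrite !inE !mxE => /andP [/eqP -> /eqP ->]; rewrite !eqxx mul1r.
by rewrite sumr_const mulr_natl.
Qed.

Lemma balQ (b n v : nat) : (0 < v)%N -> (b%:Q = n%:Q / v%:Q) <-> (b * v = n)%N.
Proof.
move=> v0; have v0' : (v%:Q != 0) by rewrite pnatr_eq0 -lt0n.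
rewrite -[b%:Q]divr1; split.
  by move/eqP; rewrite eqr_div ?oner_eq0 // mulr1 -natrM eqr_nat => /eqP.
by move=> <-; apply/eqP; rewrite eqr_div ?oner_eq0 // mulr1 -natrM.
Qed.

Lemma fairQ (c b C n : nat) : (0 < b)%N -> (0 < n)%N ->
  (c%:Q / b%:Q = C%:Q / n%:Q) <-> (c * n = C * b)%N.
Proof.
move=> b0 n0.
have b0' : (b%:Q != 0) by rewrite pnatr_eq0 -lt0n.
have n0' : (n%:Q != 0) by rewrite pnatr_eq0 -lt0n.
split.
  by move/eqP; rewrite eqr_div // -!natrM eqr_nat => /eqP.
by move=> H; apply/eqP; rewrite eqr_div // -!natrM H.
Qed.

Lemma sqrt_nv (R : rcfType) (b n v : nat) : (b * v = n)%N ->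
  Num.sqrt ((n * v)%N%:R : R) = v%:R * Num.sqrt (b%:R).
Proof.
move=> <-; rewrite -mulnA natrM sqrtrM ?ler0n // natrM -expr2 sqrtr_sqr.
by rewrite normr_nat mulrC.
Qed.

Lemma keyE (R : rcfType) (c C b n v : nat) : (0 < b)%N -> (0 < v)%N -> (b * v = n)%N ->
  ((c%:R : R) / Num.sqrt (b%:R) = C%:R / Num.sqrt ((n * v)%N%:R)) <-> (c * v = C)%N.
Proof.
move=> b0 v0 bv; rewrite (sqrt_nv R _ _ _ bv).
have sb : Num.sqrt (b%:R : R) != 0 by rewrite gt_eqF // sqrtr_gt0 ltr0n.
have v0' : (v%:R : R) != 0 by rewrite pnatr_eq0 -lt0n.
split.
  move/eqP; rewrite eqr_div ?mulf_neq0 // mulrA => /eqP /(mulIf sb) /eqP.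
  by rewrite -natrM eqr_nat => /eqP.
move=> <-; apply/eqP; rewrite eqr_div ?mulf_neq0 // natrM mulrA.
by [].
Qed.

Theorem theorem2 (R : rcfType) (n h v : nat) (lab : 'I_n -> 'I_h)
  (part : 'I_n -> 'I_v) (hv : (1 <= v)%N)
  (hne : forall j : 'I_v, exists i : 'I_n, part i = j) :
  (fair lab part /\ balanced part) <->
  (Fmx R lab)^T *m Hmx R part = Mtilde R v lab.
Proof.
have bpos j : (0 < #|block part j|)%N.
  by have [i hi] := hne j; apply/card_gt0P; exists i; rewrite inE hi.
have npos : (0 < n)%N.
  have [i _] := hne (Ordinal hv); by case: n i lab part hne bpos => [[]|].
have sumC : (\sum_s #|labclass lab s| = n)%N.
  rewrite -[RHS](card_ord n) -cardsT -(@sum_lab _ _ lab); apply: eq_bigr => s _.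
  by rewrite setIT.
have fairE : fair lab part <-> forall j s,
    (#|labclass lab s :&: block part j| * n = #|labclass lab s| * #|block part j|)%N.
  by split=> H j s; apply/fairQ => //; apply: H.
have balE : balanced part <-> forall j, (#|block part j| * v = n)%N.
  by split=> H j; apply/balQ => //; apply: H.
rewrite fairE balE.
have matE : (Fmx R lab)^T *m Hmx R part = Mtilde R v lab <-> forall s j,
   (#|labclass lab s :&: block part j|%:R : R) / Num.sqrt (#|block part j|%:R)
   = #|labclass lab s|%:R / Num.sqrt ((n * v)%N%:R).
  split.
    by move=> H s j; rewrite -entry H mxE.
  by move=> H; apply/matrixP => s j; rewrite entry H mxE.
rewrite matE; split.
  move=> [HF HB] s j; apply/keyE => //; apply/eqP.
  rewrite -(eqn_pmul2l (bpos j)) [X in X == _]mulnCA (HB j) (HF j s).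
  by rewrite mulnC.
move=> H.
have HB : forall j, (#|block part j| * v = n)%N.
  move=> j.
  set b := #|block part j|.
  have sb : Num.sqrt (b%:R : R) != 0 by rewrite gt_eqF // sqrtr_gt0 ltr0n; apply: bpos.
  have sq : Num.sqrt ((n * v)%N%:R : R) != 0.
    by rewrite gt_eqF // sqrtr_gt0 ltr0n muln_gt0 npos.
  have E1 s : (#|labclass lab s :&: block part j|%:R : R) * Num.sqrt ((n * v)%N%:R)
      = #|labclass lab s|%:R * Num.sqrt (b%:R).
    by apply/eqP; rewrite -eqr_div // H.
  have E2 : (b%:R : R) * Num.sqrt ((n * v)%N%:R) = n%:R * Num.sqrt (b%:R).
    have Eb : (b%:R : R) = \sum_s (#|labclass lab s :&: block part j|%:R : R).
      by rewrite -natr_sum (@sum_lab _ _ lab (block part j)).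
    have En : (n%:R : R) = \sum_s (#|labclass lab s|%:R : R).
      by rewrite -natr_sum sumC.
    rewrite [X in X * _ = _]Eb [X in _ = X * _]En !mulr_suml.
    apply: eq_bigr => s _; apply: E1.
  have E3 : ((b * b * (n * v))%N%:R : R) = (n * n * b)%N%:R.
    move: (congr1 (fun x => x ^+ 2) E2) => /=.
    by rewrite !exprMn !sqr_sqrtr ?ler0n // !natrM.
  move/eqP: E3; rewrite eqr_nat => /eqP E3.
  have bn : (0 < b * n)%N by rewrite muln_gt0 bpos npos.
  apply/eqP; rewrite -(eqn_pmul2l bn); apply/eqP.
  by move: E3; rewrite /b; nia.
split=> // j s.
have /keyE := H s j; move=> /(_ (bpos j) hv (HB j)) E.
by move: (HB j) E; nia.
Qed.
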